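(* Let $\mathfrak{G}$ be a non-redundant assembly graph, $v$ a vertex and $s$ a finite string such that $Label(v)=MES(s)$, the MES extension being taken with respect to $\mathrm{CPC}(\mathfrak{G})$. Then for every circuit $C$ of $\mathfrak{G}$, the number of occurrences of $v$ in $C$ equals the number of occurrences of $s$ in $Label(C)$.
   Context: All strings are over a fixed finite alphabet $\Sigma$. A cyclic string is a bi-infinite periodic word $\mathbb{Z}\to\Sigma$ up to shift, with least period $d$; for a nonempty finite $x$, $\langle x\rangle$ is the cyclic string repeating $x$. Occurrences of a finite string in a cyclic string are counted by start positions modulo $d$; a cyclic string is a substring only of itself. A string $u$ is a proper infix of $w$ if $w=aub$ with $a,b$ nonempty. A string $t$ is a MES for a set $\mathfrak{C}$ of cyclic strings if it is a substring of some element of $\mathfrak{C}$ and every proper superstring of $t$ has strictly fewer occurrences than $t$ in at least one element of $\mathfrak{C}$. For a finite substring $s$ of an element of $\mathfrak{C}$, $MES(s)$ is the unique MES in which $s$ occurs exactly once and such that every occurrence of $s$ in an element of $\mathfrak{C}$ extends to an occurrence of $MES(s)$. An abstract assembly graph is a finite directed multigraph with labelled vertices and edges such that for every edge $e$ from $u$ to $v$, $Label(u)$ is a prefix and $Label(v)$ a suffix of $Label(e)$; $e$ is a prefix edge if $Label(e)=Label(v)$ and a suffix edge if $Label(e)=Label(u)$. An assembly graph is one in which every vertex and edge lies on a directed cycle and no edge is both a prefix and a suffix edge. Walk label of $v_0,e_1,\dots,e_n,v_n$: $Label(e_1)$ followed, for $i\ge2$, by $Label(e_i)$ with its first $|Label(v_{i-1})|$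 characters removed. A circuit is a primitive closed walk up to rotation; if its walk label is $Label(v_0)x$, its label is $\langle x\rangle$; the number of occurrences of $v$ in the circuit is the number of $i\in\{1,\dots,n\}$ with $v_i=v$; $\mathrm{CPC}$ is the set of circuit labels. $P$ is an inner subwalk of $Q$ if $Q=APB$ with walks $A,B$ each having at least one edge; the graph is non-redundant if whenever $Label(P)$ is a proper infix of $Label(Q)$, $P$ is an inner subwalk of $Q$. *)

(* Defs.v *)
From mathcomp Require Import all_boot.
Set Implicit Arguments. Unset Strict Implicit. Unset Printing Implicit Defensive.

Section Strings.
Variable T : finType.

(** Cyclic strings are represented by a nonempty representative word x,
    standing for <x>, the bi-infinite word i |-> x[i mod |x|]. *)

(* letter of the bi-infinite word <x> at position i (None iff x = [::]) *)
Definition wat (x : seq T) (i : nat) : option T :=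
  nth None (map Some x) (i %% size x).

Definition cper (x : seq T) : nat :=
  (find (fun d => rot d.+1 x == x) (iota 0 (size x))).+1.

Definition match_at (u x : seq T) (i : nat) : bool :=
  map Some u == [seq wat x (i + k) | k <- iota 0 (size u)].

(* number of occurrences of u in <x>, start positions counted modulo the
   least period *)
Definition occ_cyc (u x : seq T) : nat :=
  count (match_at u x) (iota 0 (cper x)).

Definition occurs_fin_at (u t : seq T) (j : nat) : bool :=
  (j + size u <= size t) && (take (size u) (drop j t) == u).

Definition occ_fin (u t : seq T) : nat :=
  count (occurs_fin_at u t) (iota 0 (size t).+1).

Definition cyc_eq (x y : seq T) : Prop :=
  x <> [::] /\ y <> [::] /\ exists i, forall j, wat x (i + j) = wat y j.

Section MES.
(* a set of cyclic strings, given by a predicate on nonempty representatives *)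
Variable C : seq T -> Prop.

Definition is_MES_fin (t : seq T) : Prop :=
  (exists c, C c /\ 0 < occ_cyc t c) /\
  (forall u : seq T, infix t u -> u <> t ->
     exists c, C c /\ occ_cyc u c < occ_cyc t c) /\
  (* cyclic superstrings <y> (in which t occurs); the number of occurrences
     of <y> in <c> is 1 if <y> = <c> and 0 otherwise *)
  (forall y : seq T, y <> [::] -> 0 < occ_cyc t y ->
     exists c, C c /\
       ((cyc_eq y c /\ 1 < occ_cyc t c) \/ (~ cyc_eq y c /\ 0 < occ_cyc t c))).

Definition is_MES_of (s t : seq T) : Prop :=
  (exists c, C c /\ 0 < occ_cyc s c) /\
  is_MES_fin t /\
  occ_fin s t = 1 /\
  (forall c, C c -> forall i, i < cper c -> match_at s c i ->
     exists p j, match_at t c p /\ occurs_fin_at s t j /\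
                 p + j = i %[mod cper c]).
End MES.
End Strings.

Section Graphs.
Variables (T : finType) (V E : finType) (src tgt : E -> V)
          (lv : V -> seq T) (le : E -> seq T).

(* a walk v0, e1, v1, ..., en, vn is given by v0 and the edge list [e1..en] *)
Fixpoint is_walk (v0 : V) (es : seq E) : bool :=
  if es is e :: es' then (src e == v0) && is_walk (tgt e) es' else true.

Definition wend (v0 : V) (es : seq E) : V := last v0 (map tgt es).

(* walk label; for n >= 1 this is Label(e1) followed by the Label(e_i) with
   their first |Label(v_{i-1})| characters removed; for n = 0 it is Label(v0) *)
Definition wlabel (v0 : V) (es : seq E) : seq T :=
  lv v0 ++ flatten [seq drop (size (lv (src e))) (le e) | e <- es].

Definition closed_walk (v0 : V) (es : seq E) : bool :=
  [&& es != [::], is_walk v0 es & wend v0 es == v0].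

Definition primitive_edges (es : seq E) : Prop :=
  forall (k : nat) (p : seq E), 1 < k -> es <> flatten (nseq k p).

(* a circuit (given by one of its rotations) *)
Definition circuit (v0 : V) (es : seq E) : Prop :=
  closed_walk v0 es /\ primitive_edges es.

Definition clabel (v0 : V) (es : seq E) : seq T :=
  drop (size (lv v0)) (wlabel v0 es).

Definition vocc (v : V) (es : seq E) : nat := count (fun e => tgt e == v) es.

Definition CPC (c : seq T) : Prop :=
  exists v0 es, circuit v0 es /\ c = clabel v0 es.

Definition abstract_assembly_graph : Prop :=
  forall e, prefix (lv (src e)) (le e) /\ suffix (lv (tgt e)) (le e).

Definition prefix_edge (e : E) : bool := le e == lv (tgt e).
Definition suffix_edge (e : E) : bool := le e == lv (src e).

Definition assembly_graph : Prop :=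
  abstract_assembly_graph /\
  (forall v, exists v0 es, closed_walk v0 es /\ v \in map tgt es) /\
  (forall e, exists v0 es, closed_walk v0 es /\ e \in es) /\
  (forall e, ~~ (prefix_edge e && suffix_edge e)).

Definition inner_subwalk (p0 : V) (ps : seq E) (q0 : V) (qs : seq E) : Prop :=
  exists (a b : seq E), a <> [::] /\ b <> [::] /\
    qs = a ++ ps ++ b /\ wend q0 a = p0.

Definition proper_infix (u w : seq T) : Prop :=
  exists a b, a <> [::] /\ b <> [::] /\ w = a ++ u ++ b.

Definition non_redundant : Prop :=
  forall p0 ps q0 qs, is_walk p0 ps -> is_walk q0 qs ->
    proper_infix (wlabel p0 ps) (wlabel q0 qs) -> inner_subwalk p0 ps q0 qs.

End Graphs.

(* Main.v *)
Require Import Defs.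
From mathcomp Require Import all_boot.
From mathcomp Require Import zify.
Set Implicit Arguments. Unset Strict Implicit. Unset Printing Implicit Defensive.

Ltac normsz T := repeat (match goal with
  | |- context [@size ?A ?x] => progress change (@size A x) with (@size (Finite.sort T) x)
  | H : context [@size ?A ?x] |- _ => progress change (@size A x) with (@size (Finite.sort T) x) in H
  end).
Ltac slia T := normsz T; lia.

Lemma nth_flatten_nseq (A : Type) (x0 : A) (w : seq A) r q :
  q < r * size w -> nth x0 (flatten (nseq r w)) q = nth x0 w (q %% size w).
Proof.
elim: r q => [|r IH] q; first by rewrite mul0n.
rewrite mulSn /= nth_cat => Hq.
case: ltnP => Hw; first by rewrite modn_small.
rewrite IH; last by lia.
by rewrite -{2}(subnK Hw) modnDr.
Qed.

Lemma size_flatten_nseq (A : Type) (w : seq A) r :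
  size (flatten (nseq r w)) = r * size w.
Proof. by elim: r => //= r IH; rewrite size_cat IH mulSn. Qed.

Lemma split_at (A : Type) (x0 : A) (U X : seq A) q :
  q + size X <= size U ->
  (forall k, k < size X -> nth x0 U (q + k) = nth x0 X k) ->
  U = take q U ++ X ++ drop (q + size X) U.
Proof.
move=> Hs Hn.
have HX : take (size X) (drop q U) = X.
  apply: (eq_from_nth (x0 := x0)).
    by rewrite size_takel // size_drop; lia.
  move=> i; rewrite size_takel ?size_drop => [Hi|]; last by lia.
  by rewrite nth_take // nth_drop Hn.
by rewrite -{1}(cat_take_drop q U) -{1}(cat_take_drop (size X) (drop q U)) HX drop_drop addnC.
Qed.
Lemma nth_rot_mod (A : Type) (x0 : A) (L : seq A) d y :
  d < size L -> y < size L -> nth x0 (rot d L) y = nth x0 L ((y + d) %% size L).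
Proof.
move=> Hd Hy; rewrite /rot nth_cat size_drop.
case: ltnP => H.
  rewrite nth_drop modn_small; last by lia.
  by rewrite addnC.
have Hlt : y - (size L - d) < d by lia.
rewrite (nth_take _ Hlt).
have -> : y + d = (y + d - size L) + size L by lia.
rewrite modnDr modn_small; last by lia.
congr nth; lia.
Qed.
Lemma count1_uniq (P : pred nat) K a b :
  count P (iota 0 K) = 1 -> P a -> P b -> a < K -> b < K -> a = b.
Proof.
move=> Hc Pa Pb aK bK; apply/eqP; apply/negPn/negP => Hab.
have : size [:: a; b] <= size (filter P (iota 0 K)).
  apply: uniq_leq_size; first by rewrite /= inE Hab.
  move=> z; rewrite !inE mem_filter mem_iota => /orP[] /eqP ->; apply/andP; split => //; lia.
by rewrite size_filter Hc.
Qed.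

Lemma nth_cat_shift (A0 : Type) (x0 : A0) (Y W : seq A0) i :
  nth x0 (Y ++ W) (size Y + i) = nth x0 W i.
Proof. by rewrite nth_cat ltnNge leq_addr /= addKn. Qed.

Lemma infix_of (A0 : Type) (Y W Z A X B : seq A0) :
  Y ++ W ++ Z = A ++ X ++ B -> size Y < size A ->
  size A + size X < size Y + size W ->
  exists a b, a <> [::] /\ b <> [::] /\ W = a ++ X ++ b.
Proof.
move=> HS H1 H2.
case HW: W => [|x0 W']; first by rewrite HW /= in H2; lia.
rewrite -HW.
set q := size A - size Y.
have HWs : W = take q W ++ X ++ drop (q + size X) W.
  apply: (@split_at _ x0 W X q); first by lia.
  move=> k Hk.
  have := nth_cat_shift x0 Y (W ++ Z) (q + k).
  have Hlt : q + k < size W by lia.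
  rewrite HS [nth x0 (W ++ Z) _]nth_cat Hlt.
  have -> : size Y + (q + k) = size A + k by rewrite /q; lia.
  by rewrite nth_cat_shift nth_cat Hk => <-.
exists (take q W), (drop (q + size X) W); split; last split => //.
  move=> Ht; have := f_equal size Ht; rewrite size_takel /=; [lia | lia].
move=> Ht; have := f_equal size Ht; rewrite size_drop /=; lia.
Qed.

Section Walks.
Variables (T : finType) (V E : finType) (src tgt : E -> V)
          (lv : V -> seq T) (le : E -> seq T).
Hypothesis AG : abstract_assembly_graph src tgt lv le.

Definition inc (xs : seq E) : seq T :=
  flatten [seq drop (size (lv (src e))) (le e) | e <- xs].

Lemma wlabelE u xs : wlabel src lv le u xs = lv u ++ inc xs.
Proof. by []. Qed.

Lemma wlabel_nil u : wlabel src lv le u [::] = lv u.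
Proof. by rewrite wlabelE /inc /= cats0. Qed.

Lemma inc_cat xs ys : inc (xs ++ ys) = inc xs ++ inc ys.
Proof. by rewrite /inc map_cat flatten_cat. Qed.

Lemma is_walk_cat u xs ys :
  is_walk src tgt u (xs ++ ys) = is_walk src tgt u xs && is_walk src tgt (wend tgt u xs) ys.
Proof.
elim: xs u => [|e xs IH] u //=.
by rewrite IH andbA.
Qed.

Lemma wend_cat u xs ys : wend tgt u (xs ++ ys) = wend tgt (wend tgt u xs) ys.
Proof. by rewrite /wend map_cat last_cat. Qed.

Lemma wend_cons u e xs : wend tgt u (e :: xs) = wend tgt (tgt e) xs.
Proof. by []. Qed.

Lemma wlabel_split u xs : is_walk src tgt u xs ->
  exists y, forall ys, wlabel src lv le u (xs ++ ys) = y ++ wlabel src lv le (wend tgt u xs) ys.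
Proof.
elim: xs u => [|e xs IH] u /=; first by exists [::].
case/andP => /eqP Hs Hw.
case: (IH _ Hw) => y Hy.
case: (AG e) => /prefixP [z Hz] /suffixP [z' Hz'].
exists (z' ++ y) => ys.
rewrite wlabelE /inc /= -/(inc (xs ++ ys)) -Hs.
rewrite catA {1}Hz drop_size_cat // -Hz Hz'.
by rewrite -[(z' ++ _) ++ _]catA -wlabelE Hy catA.
Qed.

Lemma wlabel_suffix u xs : is_walk src tgt u xs ->
  exists y, wlabel src lv le u xs = y ++ lv (wend tgt u xs).
Proof.
move=> /wlabel_split [y Hy]; exists y.
have := Hy [::]; rewrite cats0 => ->.
by rewrite wlabelE /inc /= cats0.
Qed.

Lemma size_lv_wend u xs : is_walk src tgt u xs ->
  size (lv (wend tgt u xs)) <= size (wlabel src lv le u xs).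
Proof. by case/wlabel_suffix => y ->; rewrite size_cat leq_addl. Qed.

End Walks.

Section Pos.
Variables (T : finType) (V E : finType) (src tgt : E -> V)
          (lv : V -> seq T) (le : E -> seq T).
Hypothesis AG : abstract_assembly_graph src tgt lv le.
Hypothesis NB : forall e, ~~ ((le e == lv (tgt e)) && (le e == lv (src e))).

Local Notation wl := (wlabel src lv le).
Local Notation iw := (is_walk src tgt).
Local Notation we := (wend tgt).
Local Notation inc := (inc src lv le).

Lemma edge_pref e : size (le e) = size (lv (tgt e)) -> size (lv (src e)) < size (lv (tgt e)).
Proof.
case: (AG e) => /prefixP [z Hz] /suffixP [z' Hz'] Hs.
have E1 : size (le e) = size z' + size (lv (tgt e)) by rewrite Hz' size_cat.
have E2 : size (le e) = size (lv (src e)) + size z by rewrite Hz size_cat.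
have Hz0 : z' = [::] by apply: size0nil; lia.
have Hp : le e == lv (tgt e) by rewrite Hz' Hz0.
have := NB e; rewrite Hp /= => Hn.
have : z != [::] by apply: contra Hn => /eqP Hz1; rewrite Hz Hz1 cats0.
case: z Hz E2 => // a z _ E2 _ /=; rewrite /= in E2; lia.
Qed.

Lemma edge_suff e : size (le e) = size (lv (src e)) -> size (lv (tgt e)) < size (lv (src e)).
Proof.
case: (AG e) => /prefixP [z Hz] /suffixP [z' Hz'] Hs.
have E1 : size (le e) = size z' + size (lv (tgt e)) by rewrite Hz' size_cat.
have E2 : size (le e) = size (lv (src e)) + size z by rewrite Hz size_cat.
have Hz0 : z = [::] by apply: size0nil; lia.
have Hp : le e == lv (src e) by rewrite Hz Hz0 cats0.
have := NB e; rewrite Hp andbT => Hn.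
have : z' != [::] by apply: contra Hn => /eqP Hz1; rewrite Hz' Hz1.
case: z' Hz' E1 => // a z' _ E1 _; rewrite /= in E1; lia.
Qed.

Lemma wlabel_cons_size u e xs : iw u (e :: xs) ->
  size (wl u (e :: xs)) = size (le e) - size (lv (tgt e)) + size (wl (tgt e) xs) /\
  size (lv (tgt e)) <= size (le e) /\
  size (inc (e :: xs)) = size (le e) - size (lv (src e)) + size (inc xs) /\
  size (lv (src e)) <= size (le e).
Proof.
move=> /= /andP [/eqP Hs Hw].
case: (AG e) => /prefixP [z Hz] /suffixP [z' Hz'].
have Hi : inc (e :: xs) = z ++ inc xs.
  by rewrite /inc /= -/(inc xs) Hz drop_size_cat.
have Hl : wl u (e :: xs) = z' ++ wl (tgt e) xs.
  by rewrite wlabelE Hi -Hs catA -Hz Hz' -catA.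
have E1 : size (le e) = size z' + size (lv (tgt e)) by rewrite Hz' size_cat.
have E2 : size (le e) = size (lv (src e)) + size z by rewrite Hz size_cat.
rewrite Hl Hi !size_cat; slia T.
Qed.

Lemma strict_pref u xs : iw u xs -> xs != [::] ->
  size (wl u xs) = size (lv (we u xs)) -> size (lv u) < size (lv (we u xs)).
Proof.
elim: xs u => [|e xs IH] u // Hw _.
have [H1 [H2 _]] := wlabel_cons_size Hw.
move: Hw => /= /andP [/eqP Hs Hw].
rewrite wend_cons H1 => Heq.
have Hle := size_lv_wend AG Hw.
have He : size (le e) = size (lv (tgt e)) by lia.
have := edge_pref He; rewrite Hs => Hlt.
clear H1 H2; case: xs IH Hw Heq Hle => [|e' xs] IH Hw Heq Hle; first by [].
apply: (ltn_trans Hlt); apply: IH => //; lia.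
Qed.

Lemma strict_suff u xs : iw u xs -> xs != [::] -> inc xs = [::] ->
  size (lv (we u xs)) < size (lv u).
Proof.
elim: xs u => [|e xs IH] u // Hw _ Hi.
have [_ [_ [H3 H4]]] := wlabel_cons_size Hw.
move: Hw => /= /andP [/eqP Hs Hw].
rewrite wend_cons.
have Hi0 : size (inc (e :: xs)) = 0 by rewrite Hi.
have He : size (le e) = size (lv (src e)) by lia.
have := edge_suff He; rewrite Hs => Hlt.
case: xs IH Hw Hi Hi0 H3 => [|e' xs] IH Hw Hi Hi0 H3; first by [].
apply: leq_trans Hlt; apply: ltnW; apply: IH => //.
apply: size0nil; slia T.
Qed.

Variables (v0 : V) (F : seq E).
Hypothesis HF : iw v0 F.

Definition xv k := we v0 (take k F).
Definition ell k := size (wl v0 (take k F)).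
Definition sp k := ell k - size (lv (xv k)).
Definition seg i j := drop i (take j F).
Definition UU := wl v0 F.

Lemma walk_take k : iw v0 (take k F).
Proof. by move: HF; rewrite -{1}(cat_take_drop k F) is_walk_cat => /andP []. Qed.

Lemma ell_sp k : ell k = sp k + size (lv (xv k)).
Proof. by rewrite /sp subnK // /ell /xv size_lv_wend // walk_take. Qed.

Lemma take_seg i j : i <= j -> take j F = take i F ++ seg i j.
Proof. by move=> Hij; rewrite /seg -{1}(cat_take_drop i (take j F)) take_takel. Qed.

Lemma seg_walk i j : i <= j -> iw (xv i) (seg i j) /\ xv j = we (xv i) (seg i j).
Proof.
move=> Hij; have := walk_take j; rewrite /xv (take_seg Hij) is_walk_cat => /andP [_ ->].
by rewrite wend_cat.
Qed.

Lemma size_seg i j : j <= size F -> size (seg i j) = j - i.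
Proof. by move=> Hj; rewrite /seg size_drop size_takel. Qed.

Lemma UU_seg i j : i <= j ->
  exists Y Z, UU = Y ++ wl (xv i) (seg i j) ++ Z /\ size Y = sp i /\
     ell j = sp i + size (wl (xv i) (seg i j)).
Proof.
move=> Hij.
case: (wlabel_split AG (walk_take i)) => y Hy.
have Hsy : size y = sp i.
  have := Hy [::]; rewrite cats0 wlabel_nil => Hy0.
  by rewrite /sp /ell Hy0 size_cat addnK.
have Hj : wl v0 (take j F) = y ++ wl (xv i) (seg i j) by rewrite (take_seg Hij) Hy.
exists y, (inc (drop j F)); split; last by rewrite /ell Hj size_cat Hsy.
have HU : UU = wl v0 (take j F) ++ inc (drop j F).
  by rewrite /UU -{1}(cat_take_drop j F) wlabelE inc_cat catA.
by rewrite HU Hj catA.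
Qed.

Lemma sp_mono i j : i <= j -> sp i <= sp j.
Proof.
move=> Hij; case: (UU_seg Hij) => Y [Z [_ [_ He]]].
have [Hw Hx] := seg_walk Hij.
have := size_lv_wend AG Hw; rewrite -Hx => Hl.
by rewrite /sp in He *; slia T.
Qed.

Lemma ell_mono i j : i <= j -> ell i <= ell j.
Proof.
move=> Hij; case: (UU_seg Hij) => Y [Z [_ [_ He]]].
by rewrite He ell_sp wlabelE size_cat; lia.
Qed.

Lemma sp_const i j : i < j -> j <= size F -> sp i = sp j -> size (lv (xv i)) < size (lv (xv j)).
Proof.
move=> Hij HjN Hs; have Hij' := ltnW Hij.
case: (UU_seg Hij') => Y [Z [_ [_ He]]].
have [Hw Hx] := seg_walk Hij'.
rewrite Hx; apply: strict_pref => //.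
  by rewrite -size_eq0 size_seg //; lia.
have := ell_sp j; rewrite He Hs Hx; lia.
Qed.


Lemma sp0 : sp 0 = 0.
Proof. by rewrite /sp /ell /xv take0 wlabel_nil subnn. Qed.

Lemma ellN : ell (size F) = size UU.
Proof. by rewrite /ell take_size. Qed.

Lemma take_ext i a : i <= size F -> forall j c, i + size a <= j -> take j F = take i F ++ a ++ c ->
  take (i + size a) F = take i F ++ a.
Proof.
move=> Hi j c Hj Ht.
rewrite -(take_takel _ Hj) Ht catA take_size_cat //.
by rewrite size_cat size_takel.
Qed.

Lemma cover (NR : non_redundant src tgt lv le) p0 ps A B :
  iw p0 ps -> UU = A ++ wl p0 ps ++ B -> 0 < size A -> 0 < size B ->
  exists k, [/\ k + size ps <= size F, xv k = p0, seg k (k + size ps) = ps,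
     size A <= sp k & ell (k + size ps) <= size A + size (wl p0 ps)].
Proof.
move=> Hps HU HA HB.
set N := size F.
have HUs : size UU = size A + size (wl p0 ps) + size B by rewrite HU !size_cat addnA.
have exP1 : exists k, (k <= N) && (sp k < size A) by exists 0; rewrite sp0 HA.
have ub1 : forall k, (k <= N) && (sp k < size A) -> k <= N by move=> k /andP [].
case: (ex_maxnP exP1 ub1) => al /andP [Hal1 Hal2] Hmax.
have exP2 : exists k, (k <= N) && (size A + size (wl p0 ps) < ell k).
  by exists N; rewrite leqnn ellN HUs /=; lia.
case: (ex_minnP exP2) => be /andP [Hbe1 Hbe2] Hmin.
set ga := maxn al be.
have Hag : al <= ga by rewrite leq_maxl.
have Hgb : be <= ga by rewrite leq_maxr.
have HgN : ga <= N by rewrite geq_max Hal1 Hbe1.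
case: (UU_seg Hag) => Y [Z [HUY [HY Hell]]].
have Hellg := ell_mono Hgb.
have [Hwseg _] := seg_walk Hag.
have Hpi : proper_infix (wl p0 ps) (wl (xv al) (seg al ga)).
  rewrite /proper_infix.
  have HUY' : Y ++ wl (xv al) (seg al ga) ++ Z = A ++ wl p0 ps ++ B by rewrite -HUY.
  have N1 : size Y < size A by rewrite HY.
  have N2 : size A + size (wl p0 ps) < size Y + size (wl (xv al) (seg al ga)).
    by rewrite HY; move: Hell Hellg Hbe2; clear; move=> *; slia T.
  exact: (infix_of HUY' N1 N2).
case: (NR _ _ _ _ Hps Hwseg Hpi) => a [b [Ha [Hb [Hq Hw]]]].
have Hsz : size (seg al ga) = ga - al by rewrite size_seg.
have Hsz2 : size (seg al ga) = size a + size ps + size b by rewrite Hq !size_cat addnA.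
have Ha0 : 0 < size a by case: (a) Ha.
have Hb0 : 0 < size b by case: (b) Hb.
have Htg : take ga F = take al F ++ a ++ ps ++ b by rewrite (take_seg Hag) Hq.
have Htk : take (al + size a) F = take al F ++ a.
  by apply: (take_ext Hal1 (j := ga) (c := ps ++ b)); [lia | ].
have Htk2 : take (al + size a + size ps) F = take (al + size a) F ++ ps.
  apply: (take_ext _ (j := ga) (c := b)); [lia | lia | by rewrite Htk -catA].
exists (al + size a); split.
- lia.
- by rewrite /xv Htk wend_cat Hw.
- rewrite /seg Htk2 drop_size_cat // size_takel //; lia.
- have H1 : size A <= sp al.+1.
    case: leqP => // Hlt.
    have : al.+1 <= al by apply: Hmax; rewrite Hlt andbT; lia.
    by rewrite ltnn.
  apply: (leq_trans H1); apply: sp_mono; lia.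
- have Hgbe : ga = be by rewrite /ga; apply/maxn_idPr; lia.
  case: leqP => // Hlt.
  have : be <= al + size a + size ps by apply: Hmin; rewrite Hlt andbT; lia.
  lia.
Qed.

End Pos.

Lemma rot_prim (A0 : Type) (es : seq A0) i :
  (forall (k : nat) (p : seq A0), 1 < k -> es <> flatten (nseq k p)) ->
  0 < i -> i < size es -> rot i es = es -> False.
Proof.
move=> Hp Hi0 Hin Hr.
set n := size es.
have x0 : A0.
  by move: Hin; rewrite /n; case: (es) => [|x s]; [rewrite /= ltn0 | move=> _; exact: x].
have Hn0 : 0 < n by lia.
have H1 : forall y, y < n -> nth x0 es ((y + i) %% n) = nth x0 es y.
  by move=> y Hy; rewrite -nth_rot_mod // Hr.
have H2 : forall c y, y < n -> nth x0 es ((y + c * i) %% n) = nth x0 es y.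
  elim=> [|c IH] y Hy; first by rewrite mul0n addn0 modn_small.
  have -> : y + c.+1 * i = (y + c * i) + i by rewrite mulSn; lia.
  by rewrite -modnDml H1 ?ltn_pmod // IH.
case: (Bezoutr i Hn0) => a _ Hdv.
set g := gcdn i n in Hdv.
have Hg0 : 0 < g by rewrite gcdn_gt0 Hi0.
have Hgn : g %| n by apply: dvdn_gcdr.
have Hgi : g <= i by apply: dvdn_leq => //; apply: dvdn_gcdl.
have H3 : forall y, g <= y -> y < n -> nth x0 es (y - g) = nth x0 es y.
  move=> y Hgy Hy.
  rewrite -(H2 a y Hy).
  have -> : y + a * i = (y - g) + (g + a * i) by lia.
  by rewrite -modnDmr (eqP Hdv) addn0 modn_small //; lia.
have H4 : forall y, y < n -> nth x0 es y = nth x0 es (y %% g).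
  elim/ltn_ind=> y IH Hy.
  case: (ltnP y g) => Hyg; first by rewrite modn_small.
  rewrite -H3 // IH; [|lia|lia].
  by rewrite -{2}(subnK Hyg) modnDr.
have Hk : 1 < n %/ g.
  have := divnK Hgn; case: (n %/ g) => [|[|k]] /=; lia.
apply: (Hp (n %/ g) (take g es) Hk).
have Hsz : size (take g es) = g by rewrite size_takel //; lia.
apply: (eq_from_nth (x0 := x0)).
  by rewrite size_flatten_nseq Hsz divnK.
move=> y Hy.
rewrite nth_flatten_nseq Hsz; last by rewrite divnK.
by rewrite nth_take ?ltn_pmod // H4.
Qed.

Lemma eq_map_all (A0 : Type) (B0 : eqType) (f g : A0 -> option B0) (s : seq A0) :
  (map f s == map g s) = all (fun k => f k == g k) s.
Proof. by elim: s => //= x s IH; rewrite eqseq_cons IH. Qed.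

Lemma match_atP (T : finType) (x0 : T) (u L : seq T) p :
  0 < size L ->
  reflect (forall k, k < size u -> nth x0 u k = nth x0 L ((p + k) %% size L))
          (match_at u L p).
Proof.
move=> HL.
have Hmap : map Some u = map (fun k => Some (nth x0 u k)) (iota 0 (size u)).
  by rewrite -{1}(mkseq_nth x0 u) /mkseq -map_comp.
rewrite /match_at Hmap eq_map_all.
apply: (iffP allP) => H k.
  move=> Hk; have := H k; rewrite mem_iota /= => /(_ Hk) /eqP.
  rewrite /wat (nth_map x0) ?size_map ?ltn_pmod // => [[]] //.
rewrite mem_iota /= => Hk.
by rewrite /wat (nth_map x0) ?ltn_pmod // H.
Qed.

Section Per.
Variables (T : finType) (V E : finType) (src tgt : E -> V)
          (lv : V -> seq T) (le : E -> seq T).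
Hypothesis AG : abstract_assembly_graph src tgt lv le.
Variables (v0 : V) (es : seq E).
Hypothesis Hw : is_walk src tgt v0 es.
Hypothesis Hc : wend tgt v0 es = v0.
Variable r : nat.
Local Notation F := (flatten (nseq r es)).
Local Notation L := (inc src lv le es).
Local Notation n := (size es).

Lemma pow_walk j : is_walk src tgt v0 (flatten (nseq j es)) /\
  wend tgt v0 (flatten (nseq j es)) = v0.
Proof.
elim: j => [|j [IH1 IH2]] //=.
by rewrite is_walk_cat wend_cat Hc Hw IH1 IH2.
Qed.

Lemma inc_pow j : inc src lv le (flatten (nseq j es)) = flatten (nseq j L).
Proof. by elim: j => //= j IH; rewrite inc_cat IH. Qed.

Lemma take_pow j i : j < r -> i <= n ->
  take (j * n + i) F = flatten (nseq j es) ++ take i es.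
Proof.
move=> Hj Hi.
have -> : r = j + (r - j - 1).+1 by lia.
rewrite nseqD flatten_cat take_cat size_flatten_nseq.
rewrite ltnNge leq_addr /= addKn; congr (_ ++ _).
rewrite /= take_cat; case: ltnP => Hi' //.
have Hin : i = n by lia.
by rewrite Hin subnn take0 cats0 take_size.
Qed.

Lemma FW : is_walk src tgt v0 F.
Proof. by case: (pow_walk r). Qed.

Lemma ell_pow j i : j < r -> i <= n ->
  ell src lv le v0 F (j * n + i) = j * size L + ell src lv le v0 es i.
Proof.
move=> Hj Hi; rewrite /ell take_pow // !wlabelE inc_cat inc_pow !size_cat size_flatten_nseq.
lia.
Qed.

Lemma xv_pow j i : j < r -> i <= n -> xv tgt v0 F (j * n + i) = xv tgt v0 es i.
Proof. by move=> Hj Hi; rewrite /xv take_pow // wend_cat (proj2 (pow_walk j)). Qed.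

Lemma sp_pow j i : j < r -> i <= n ->
  sp src tgt lv le v0 F (j * n + i) = j * size L + sp src tgt lv le v0 es i.
Proof.
move=> Hj Hi; rewrite {1}/sp ell_pow // xv_pow //.
have := ell_sp AG Hw i; rewrite /sp; lia.
Qed.

Lemma UU_pow : UU src lv le v0 F = lv v0 ++ flatten (nseq r L).
Proof. by rewrite /UU wlabelE inc_pow. Qed.

End Per.

Lemma count_bij (P Q : pred nat) K M (f : nat -> nat) :
  (forall i j, i < K -> j < K -> P i -> P j -> f i = f j -> i = j) ->
  (forall i, i < K -> P i -> f i < M /\ Q (f i)) ->
  (forall p, p < M -> Q p -> exists i, [/\ i < K, P i & f i = p]) ->
  count P (iota 0 K) = count Q (iota 0 M).
Proof.
move=> Hinj Hto Hon.
rewrite -!size_filter -(size_map f); apply: perm_size.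
apply: uniq_perm.
- rewrite map_inj_in_uniq ?filter_uniq ?iota_uniq //.
  move=> i j; rewrite !mem_filter !mem_iota /= => /andP [Pi Hi] /andP [Pj Hj].
  by apply: Hinj.
- by rewrite filter_uniq ?iota_uniq.
move=> p; apply/mapP/idP.
  case=> i; rewrite mem_filter mem_iota /= => /andP [Pi Hi] ->.
  by have [H1 H2] := Hto i Hi Pi; rewrite mem_filter mem_iota /= H2 H1.
rewrite mem_filter mem_iota /= => /andP [Qp Hp].
case: (Hon p Hp Qp) => i [Hi Pi Hf]; exists i => //.
by rewrite mem_filter mem_iota /= Pi Hi.
Qed.

Lemma mes_transfer (T : finType) (L s t : seq T) j0 :
  0 < size L -> cper L = size L -> occurs_fin_at s t j0 ->
  (forall j, occurs_fin_at s t j -> j = j0) ->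
  (forall i, i < cper L -> match_at s L i -> exists p j,
      match_at t L p /\ occurs_fin_at s t j /\ p + j = i %[mod cper L]) ->
  count (match_at t L) (iota 0 (size L)) = count (match_at s L) (iota 0 (size L)).
Proof.
move=> HL Hc Hj0 Huniq Hext.
set m := size L.
have x0 : T by case: (L) HL => [|x ?] //; exact: x.
have Hst : forall k, k < size s -> nth x0 s k = nth x0 t (j0 + k).
  move: Hj0; rewrite /occurs_fin_at => /andP [_ /eqP Ht] k Hk.
  by rewrite -{1}Ht nth_take // nth_drop.
have Hmt : forall p, match_at t L p = match_at t L (p %% m).
  move=> p; apply/(match_atP x0 _ _ HL)/(match_atP x0 _ _ HL) => H k Hk; rewrite H //.
    by rewrite modnDml.
  by rewrite modnDml.
apply: (count_bij (f := fun p => (p + j0) %% m)).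
- by move=> i j Hi Hj _ _ /eqP; rewrite eqn_modDr !modn_small // => /eqP.
- move=> i Hi /(match_atP x0 _ _ HL) Ht; split; first by rewrite ltn_pmod.
  apply/(match_atP x0 _ _ HL) => k Hk.
  move: Hj0; rewrite /occurs_fin_at => /andP [Hsz _].
  by rewrite Hst // Ht; [rewrite modnDml addnA | lia].
- move=> p Hp Hs.
  have Hp' : p < cper L by rewrite Hc.
  case: (Hext p Hp' Hs) => p' [j [Ht [Hj Hpj]]].
  have Hjj := Huniq j Hj; subst j.
  exists (p' %% m); split; first by rewrite ltn_pmod.
    by rewrite -Hmt.
  by rewrite modnDml; move: Hpj; rewrite Hc -/m => ->; rewrite modn_small.
Qed.

Section Main.
Variables (T : finType) (V E : finType) (src tgt : E -> V)
          (lv : V -> seq T) (le : E -> seq T).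
Hypothesis AG : abstract_assembly_graph src tgt lv le.
Hypothesis NB : forall e, ~~ ((le e == lv (tgt e)) && (le e == lv (src e))).
Hypothesis NR : non_redundant src tgt lv le.
Variables (v0 : V) (es : seq E).
Hypothesis Hw : is_walk src tgt v0 es.
Hypothesis Hc : wend tgt v0 es = v0.
Hypothesis Hne : es != [::].
Hypothesis Hprim : primitive_edges es.
Local Notation L := (inc src lv le es).
Local Notation n := (size es).
Local Notation m := (size L).
Local Notation l0 := (size (lv v0)).
Local Notation FF r := (flatten (nseq r es)).

Lemma m_pos : 0 < m.
Proof.
case: ltnP => // Hm.
have HL : L = [::] by apply: size0nil; lia.
have := strict_suff AG NB Hw Hne HL; rewrite Hc ltnn //.
Qed.

Lemma n_pos : 0 < n.
Proof. by case: (es) Hne. Qed.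

Lemma nth_UU r x0 q : l0 <= q -> q < l0 + r * m ->
  nth x0 (UU src lv le v0 (FF r)) q = nth x0 L ((q - l0) %% m).
Proof.
move=> H1 H2; rewrite UU_pow nth_cat ltnNge H1 /=.
rewrite nth_flatten_nseq //; lia.
Qed.

Lemma size_UU r : size (UU src lv le v0 (FF r)) = l0 + r * m.
Proof. by rewrite UU_pow size_cat size_flatten_nseq. Qed.

Lemma ell_es_n : ell src lv le v0 es n = l0 + m.
Proof. by rewrite /ell take_size wlabelE size_cat. Qed.

Lemma sp_es0 : sp src tgt lv le v0 es 0 = 0.
Proof. exact: sp0. Qed.

Lemma xv_es0 : xv tgt v0 es 0 = v0.
Proof. by rewrite /xv take0. Qed.

Lemma prim_aux d : 0 < d -> d < m -> rot d L = L -> False.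
Proof.
move=> Hd0 Hdm Hrot.
have Hm := m_pos; have Hn := n_pos.
pose R := l0.+1; pose r := R.+2.
have HF := FW Hw Hc r.
have x0 : T by case: (L) Hm => [|x ?] //; exact: x.
have e0 : E by case: (es) Hn => [|x ?] //; exact: x.
have HRm : R <= R * m by rewrite leq_pmulr.
have HRr : R < r by rewrite /r; lia.
case: (UU_seg AG HF (i := R * n) (j := R * n + n)) => [|Y [Z [HUY [HY _]]]]; first by lia.
have Hx : xv tgt v0 (FF r) (R * n) = v0 by rewrite -[R * n]addn0 (xv_pow Hw Hc) // xv_es0.
have Hseg : seg (FF r) (R * n) (R * n + n) = es.
  rewrite /seg (take_pow Hw) // take_size drop_size_cat //.
  by rewrite size_flatten_nseq.
have HspR : sp src tgt lv le v0 (FF r) (R * n) = R * m.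
  by rewrite -[R * n]addn0 (sp_pow AG Hw Hc) // sp_es0 addn0.
rewrite Hx Hseg HspR in HUY HY.
set labP := wlabel src lv le v0 es in HUY.
have HlabP : size labP = l0 + m by rewrite /labP wlabelE size_cat.
have HszU := size_UU r.
have Hocc1 : forall i, i < size labP -> nth x0 (UU src lv le v0 (FF r)) (R * m + i) = nth x0 labP i.
  by move=> i Hi; rewrite HUY -HY nth_cat_shift nth_cat Hi.
set q := R * m + d.
have Hsplit : UU src lv le v0 (FF r) =
    take q (UU src lv le v0 (FF r)) ++ labP ++ drop (q + size labP) (UU src lv le v0 (FF r)).
  apply: (@split_at _ x0 _ labP q).
    rewrite HszU HlabP /q /r; nia.
  move=> i Hi; rewrite -Hocc1 //.
  rewrite HlabP in Hi.
  rewrite !nth_UU; first last.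
  - rewrite /r; nia.
  - lia.
  - rewrite /q /r; nia.
  - rewrite /q; lia.
  set y := (R * m + i - l0) %% m.
  have Hy : y < m by rewrite ltn_pmod.
  rewrite -[in RHS]Hrot nth_rot_mod // /y modnDml.
  congr nth; congr (_ %% _); rewrite /q; lia.
have Hq1 : 0 < size (take q (UU src lv le v0 (FF r))).
  rewrite size_takel; first by rewrite /q; lia.
  rewrite HszU /q /r; nia.
have Hq2 : 0 < size (drop (q + size labP) (UU src lv le v0 (FF r))).
  rewrite size_drop HszU HlabP /q /r; nia.
case: (cover AG HF NR Hw Hsplit Hq1 Hq2) => k [Hk1 _ Hk2 Hk3 Hk4].
rewrite size_takel in Hk3 Hk4; last by rewrite HszU /q /r; nia.
rewrite size_flatten_nseq in Hk1.
have Hrot2 : rot (k %% n) es = es.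
  apply: (eq_from_nth (x0 := e0)); first by rewrite size_rot.
  move=> y; rewrite size_rot => Hy.
  rewrite nth_rot_mod ?ltn_pmod //.
  rewrite -[in RHS]Hk2 /seg nth_drop nth_take; last by lia.
  rewrite nth_flatten_nseq; last by lia.
  by rewrite modnDmr addnC.
have Hkn : k %% n = 0.
  case: (posnP (k %% n)) => // Hpos.
  exfalso; apply: (rot_prim Hprim Hpos _ Hrot2); exact: ltn_pmod.
have Hkdec : k = k %/ n * n + 0 by rewrite -Hkn -divn_eq.
set j := k %/ n in Hkdec.
have Hj : j < r.
  have : j * n + n <= r * n by move: Hk1; rewrite {1}Hkdec addn0.
  by rewrite -mulSnr leq_pmul2r.
rewrite Hkdec (sp_pow AG Hw Hc) // sp_es0 addn0 in Hk3.
rewrite Hkdec addn0 (ell_pow lv le Hw) // ell_es_n in Hk4.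
have Hwl : size (wlabel src lv le v0 es) = l0 + m by rewrite wlabelE size_cat.
rewrite Hwl in Hk4.
rewrite /q in Hk3 Hk4.
case: (leqP j R) => HjR.
  have : j * m <= R * m by rewrite leq_pmul2r.
  lia.
have : R.+1 * m <= j * m by rewrite leq_pmul2r.
rewrite mulSn; lia.
Qed.

Lemma cper_m : cper L = m.
Proof.
have Hm := m_pos.
rewrite /cper.
set P := fun d => rot d.+1 L == L.
have HP : P (m.-1) by rewrite /P prednK // rot_size.
have Hhas : has P (iota 0 m).
  by apply/hasP; exists m.-1 => //; rewrite mem_iota; lia.
have Hf := Hhas; rewrite has_find size_iota in Hf.
have := nth_find 0 Hhas; rewrite nth_iota // add0n /P => /eqP Hrot.
case: (ltnP (find P (iota 0 m)).+1 m) => Hlt.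
  by exfalso; apply: (prim_aux _ Hlt Hrot).
rewrite /P in Hf Hlt; lia.
Qed.


Lemma count_visits v : vocc tgt v es = count (match_at (lv v) L) (iota 0 m).
Proof.
set t := lv v.
have Hm := m_pos; have Hn := n_pos.
have x0 : T by case: (L) Hm => [|x ?] //; exact: x.
have e0 : E by case: (es) Hn => [|x ?] //; exact: x.
pose R := l0.+1; pose r := R + size t + 2.
have HF := FW Hw Hc r.
have HRm : R <= R * m by rewrite leq_pmulr.
have HRr : R.+1 < r by rewrite /r; lia.
pose kk i := R * n + i.+1.
pose spF := sp src tgt lv le v0 (FF r).
pose spE := sp src tgt lv le v0 es.
pose pos i := (spF (kk i) - l0) %% m.
have Hsp_kk : forall i, i < n -> spF (kk i) = R * m + spE i.+1.
  by move=> i Hi; rewrite /spF /kk (sp_pow AG Hw Hc) //; lia.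
have Hxv_kk : forall i, i < n -> xv tgt v0 (FF r) (kk i) = xv tgt v0 es i.+1.
  by move=> i Hi; rewrite /kk (xv_pow Hw Hc) //; lia.
have Hsz := size_UU r.
have HszF : size (FF r) = r * n by rewrite size_flatten_nseq.
have Hvocc : vocc tgt v es = count (fun i => xv tgt v0 es i.+1 == v) (iota 0 n).
  rewrite /vocc -{1}(mkseq_nth e0 es) /mkseq count_map.
  apply: eq_in_count => i; rewrite mem_iota /= => Hi.
  by rewrite /xv (take_nth e0) // /wend map_rcons last_rcons.
rewrite Hvocc.
apply: (count_bij (f := pos)).
-
  move=> i1 i2 Hi1 Hi2 /eqP Hv1 /eqP Hv2 Hpos.
  wlog: i1 i2 Hi1 Hi2 Hv1 Hv2 Hpos / i1 <= i2.
    move=> H; case: (leqP i1 i2) => Hle; first exact: H.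
    by symmetry; apply: H => //; first [by rewrite Hpos | by apply: ltnW].
  rewrite leq_eqVlt => /orP [/eqP // | Hlt]; exfalso.
  have E1 := Hsp_kk i1 Hi1; have E2 := Hsp_kk i2 Hi2.
  have Hmono : spF (kk i1) <= spF (kk i2).
    by apply: (sp_mono AG HF); rewrite /kk; lia.
  pose k3 := R.+1 * n + i1.+1.
  have E3 : spF k3 = R.+1 * m + spE i1.+1 by rewrite /spF /k3 (sp_pow AG Hw Hc) //; lia.
  have Hmono2 : spF (kk i2) <= spF k3.
    by apply: (sp_mono AG HF); rewrite /kk /k3 mulSnr; lia.
  have Hl0 : l0 <= spF (kk i1) by rewrite E1; lia.
  rewrite /pos in Hpos.
  have Hdv : m %| spF (kk i2) - spF (kk i1).
    move/eqP: Hpos; rewrite eq_sym eqn_mod_dvd; last by lia.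
    have -> : spF (kk i2) - l0 - (spF (kk i1) - l0) = spF (kk i2) - spF (kk i1) by lia.
    done.
  have HD : spF (kk i2) - spF (kk i1) <= m by rewrite mulSnr in E3; lia.
  have Hxk3 : xv tgt v0 (FF r) k3 = xv tgt v0 es i1.+1 by rewrite /k3 (xv_pow Hw Hc) //; lia.
  case: (posnP (spF (kk i2) - spF (kk i1))) => HD0.
    have := sp_const AG NB HF (i := kk i1) (j := kk i2).
    rewrite -/spF !Hxv_kk // Hv1 Hv2 ltnn => H; suff : false by []; apply: H; [rewrite /kk; lia | | lia].
    rewrite /kk HszF; have : R.+1 * n <= r * n by rewrite leq_pmul2r //; lia.
    rewrite mulSnr; lia.
  have HDm := dvdn_leq HD0 Hdv.
  have := sp_const AG NB HF (i := kk i2) (j := k3).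
  rewrite -/spF Hxk3 !Hxv_kk // Hv1 Hv2 ltnn => H; suff : false by []; apply: H; [rewrite /kk /k3 mulSnr; lia | | lia].
  rewrite /k3 HszF; have : R.+2 * n <= r * n by rewrite leq_pmul2r //; lia.
  rewrite !mulSnr; lia.
-
  move=> i Hi /eqP Hv; split; first by rewrite ltn_pmod.
  apply/(match_atP x0 _ _ Hm) => z Hz.
  case: (UU_seg AG HF (leqnn (kk i))) => Y [Z [HUY [HY _]]].
  have Hseg : seg (FF r) (kk i) (kk i) = [::].
    rewrite /seg drop_oversize // size_take; case: ltnP => //; lia.
  rewrite Hseg wlabel_nil Hxv_kk // Hv -/t in HUY.
  have Hl0 : l0 <= spF (kk i) by rewrite Hsp_kk //; lia.
  have HY' : size Y = spF (kk i) by rewrite HY.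
  have Hb : spF (kk i) + z < l0 + r * m.
    rewrite -Hsz HUY !size_cat; slia T.
  have := nth_cat_shift x0 Y (t ++ Z) z.
  rewrite -HUY nth_cat Hz HY nth_UU; [|lia|done].
  move=> <-; rewrite /pos modnDml; congr nth; congr (_ %% _); lia.
-
  move=> p Hp Hmt.
  pose q := l0 + R * m + p.
  have Ht1 : size t <= size t * m by rewrite leq_pmulr.
  have Hq : q + size t < l0 + r * m.
    rewrite /q /r !mulnDl; lia.
  have Hsplit : UU src lv le v0 (FF r) =
      take q (UU src lv le v0 (FF r)) ++ t ++ drop (q + size t) (UU src lv le v0 (FF r)).
    apply: (@split_at _ x0 _ t q); first by rewrite Hsz; lia.
    move=> z Hz; rewrite nth_UU; [|rewrite /q; lia|lia].
    rewrite (match_atP x0 _ _ Hm Hmt) //.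
    congr nth; rewrite /q.
    have -> : l0 + R * m + p + z - l0 = R * m + (p + z) by lia.
    by rewrite modnMDl.
  have HA : 0 < size (take q (UU src lv le v0 (FF r))).
    rewrite size_takel; [rewrite /q; lia | rewrite Hsz; lia].
  have HB : 0 < size (drop (q + size t) (UU src lv le v0 (FF r))).
    rewrite size_drop Hsz; lia.
  have Hwv : is_walk src tgt v [::] by [].
  have Hsplit' : UU src lv le v0 (FF r) = take q (UU src lv le v0 (FF r)) ++
      wlabel src lv le v [::] ++ drop (q + size t) (UU src lv le v0 (FF r)).
    by rewrite wlabel_nil.
  case: (cover AG HF NR Hwv Hsplit' HA HB) => k [Hk1 Hxk _ Hk3 Hk4].
  rewrite (_ : size (@nil E) = 0) // addn0 in Hk1 Hk4.
  rewrite size_takel in Hk3 Hk4; last by rewrite Hsz; lia.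
  rewrite wlabel_nil -/t in Hk4.
  have Hek := ell_sp AG HF k; rewrite Hxk -/t -/spF in Hek.
  rewrite -/spF in Hk3.
  have Hspk : spF k = q by lia.
  have Hk0 : 0 < k.
    case: (posnP k) => // Hk0; exfalso; move: Hspk; rewrite Hk0 /spF sp0 /q; lia.
  pose i := k.-1 %% n; pose j := k.-1 %/ n.
  have Hkd : k = j * n + i.+1 by rewrite /i /j addnS -divn_eq prednK.
  have Hi : i < n by rewrite ltn_pmod.
  have Hj : j < r.
    have : j * n < r * n by rewrite HszF in Hk1; lia.
    by rewrite ltn_pmul2r.
  move: Hxk Hspk; rewrite Hkd (xv_pow Hw Hc) // /spF (sp_pow AG Hw Hc) // -/spE => Hxk Hspk.
  exists i; split => //; first by rewrite Hxk.
  rewrite /pos Hsp_kk //.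
  have Hj2 : j <= R + R.
    case: leqP => // Hlt.
    have : (R + R).+1 * m <= j * m by rewrite leq_pmul2r.
    rewrite /q in Hspk; rewrite mulSn mulnDl; lia.
  have -> : R * m + spE i.+1 - l0 = (R + R - j) * m + p.
    rewrite mulnBl mulnDl /q in Hspk *.
    have : j * m <= R * m + R * m by rewrite -mulnDl leq_pmul2r.
    lia.
  by rewrite modnMDl modn_small.
Qed.

End Main.

Theorem theorem14 (T : finType) (V E : finType) (src tgt : E -> V)
    (lv : V -> seq T) (le : E -> seq T) (v : V) (s : seq T) :
  assembly_graph src tgt lv le ->
  non_redundant src tgt lv le ->
  is_MES_of (CPC src tgt lv le) s (lv v) ->
  forall (v0 : V) (es : seq E), circuit src tgt v0 es ->
    vocc tgt v es = occ_cyc s (clabel src lv le v0 es).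
Proof.
move=> [AG [_ [_ NBp]]] NR [_ [_ [Hocc Hext]]] v0 es Hcirc.
have [Hcw Hprim] := Hcirc.
move: Hcw; rewrite /closed_walk => /and3P [Hne Hw /eqP Hc].
have NB : forall e, ~~ ((le e == lv (tgt e)) && (le e == lv (src e))) by move=> e; exact: NBp e.
have HL : clabel src lv le v0 es = inc src lv le es by rewrite /clabel wlabelE drop_size_cat.
have HCPC : CPC src tgt lv le (inc src lv le es) by exists v0, es; split.
rewrite HL (count_visits AG NB NR Hw Hc Hne v) /occ_cyc (cper_m AG NB NR Hw Hc Hne Hprim).
have : has (occurs_fin_at s (lv v)) (iota 0 (size (lv v)).+1) by rewrite has_count; move: Hocc; rewrite /occ_fin => ->.
case/hasP => j0 _ Hj0.
have Hbound : forall j, occurs_fin_at s (lv v) j -> j < (size (lv v)).+1.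
  by move=> j /andP [Hj _]; lia.
have Huniq : forall j, occurs_fin_at s (lv v) j -> j = j0.
  by move=> j Hj; apply: (count1_uniq Hocc Hj Hj0); apply: Hbound.
apply: (mes_transfer (m_pos AG NB Hw Hc Hne) (cper_m AG NB NR Hw Hc Hne Hprim) Hj0 Huniq).
exact: Hext HCPC.
Qed.
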